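(* Let $\bm S_0\in U(2N_0)$. Then $U_1=\{\bm M\in U(2N_0):\det(\bm S_0-\bm M)\ne0\}$ is path-connected. If $\bm S_0=\bm S_0^T$, then $U_2=\{\bm M\in U_1:\bm M=\bm M^T\}$ is path-connected. If $\bm S_0=\bm S_0^P$, then $U_3=\{\bm M\in U_1:\bm M=\bm M^P\}$ is path-connected. If $\bm S_0=\bm S_0^T=\bm S_0^P$, then $U_4=\{\bm M\in U_1:\bm M=\bm M^T=\bm M^P\}$ is path-connected.
   Context: $N_0\ge1$ integer; $U(n)$ the unitary group; $\bm M^T$ the transpose; $\bm M^P:=\bm R_{2N_0}\bm M\bm R_{2N_0}$ with $\bm R_{2N_0}=\begin{bmatrix}0&\bm I_{N_0}\\\bm I_{N_0}&0\end{bmatrix}$. *)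

(* Defs.v *)
From HB Require Import structures.
From mathcomp Require Import all_boot all_order all_algebra.
From mathcomp Require Import all_classical all_reals all_analysis.
From mathcomp Require Import complex.
Set Implicit Arguments. Unset Strict Implicit. Unset Printing Implicit Defensive.
Import Order.TTheory GRing.Theory Num.Theory.
Import numFieldTopology.Exports numFieldNormedType.Exports.
Local Open Scope classical_set_scope.
Local Open Scope ring_scope.

(* topology on C = R[i]: the metric topology of the complex modulus
   (ball x e = [set y | `|x - y| < e]); matrices get the product topology *)
HB.instance Definition _ (R : rcfType) :=
  PseudoPointedMetric.copy R[i] (R[i] : numClosedFieldType)^o.

Definition adjmx (R : rcfType) (m n : nat) (A : 'M[R[i]]_(m, n)) : 'M[R[i]]_(n, m) :=
  (map_mx (fun z : R[i] => z^*) A)^T.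

Definition unitary_group (R : rcfType) (n : nat) : set 'M[R[i]]_n :=
  [set M | M *m adjmx M = 1%:M].

Definition Rswap (R : rcfType) (N0 : nat) : 'M[R[i]]_(N0 + N0) :=
  block_mx 0 1%:M 1%:M 0.

Definition Ptransp (R : rcfType) (N0 : nat) (M : 'M[R[i]]_(N0 + N0)) :
  'M[R[i]]_(N0 + N0) := Rswap R N0 *m M *m Rswap R N0.

Definition path_connected (R : realType) (T : topologicalType) (S : set T) : Prop :=
  forall x y, S x -> S y ->
  exists g : R -> T, {within `[0, 1], continuous g} /\
    g 0 = x /\ g 1 = y /\ g @` `[0, 1] `<=` S.

(* Main.v *)
Require Import Defs.
From HB Require Import structures.
From mathcomp Require Import all_boot all_order all_algebra.
From mathcomp Require Import all_classical all_reals all_analysis.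
From mathcomp Require Import complex.
From mathcomp Require Import ring.
Import Order.TTheory GRing.Theory Num.Theory.
Import numFieldTopology.Exports numFieldNormedType.Exports.
Local Open Scope classical_set_scope.
Local Open Scope ring_scope.
Set Implicit Arguments. Unset Strict Implicit.
Section Alg.
Variable R : realType.
Local Notation C := (R[i]).
Variable n : nat.
Implicit Types A B H M S Y Z : 'M[C]_n.

Lemma invmx_eq A B : A *m B = 1%:M -> invmx A = B.
Proof.
move=> AB; have [Au _] := mulmx1_unit AB.
by rewrite -[invmx A]mulmx1 -AB mulmxA mulVmx // mul1mx.
Qed.

Lemma adjmxM m p q (A : 'M[C]_(m, p)) (B : 'M[C]_(p, q)) :
  adjmx (A *m B) = adjmx B *m adjmx A.
Proof. by rewrite /adjmx map_mxM trmx_mul. Qed.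

Lemma adjmxD m p (A B : 'M[C]_(m, p)) : adjmx (A + B) = adjmx A + adjmx B.
Proof. by rewrite /adjmx map_mxD linearD. Qed.

Lemma adjmxN m p (A : 'M[C]_(m, p)) : adjmx (- A) = - adjmx A.
Proof. by rewrite /adjmx map_mxN linearN. Qed.

Lemma adjmxB m p (A B : 'M[C]_(m, p)) : adjmx (A - B) = adjmx A - adjmx B.
Proof. by rewrite adjmxD adjmxN. Qed.

Lemma adjmxZ m p a (A : 'M[C]_(m, p)) : adjmx (a *: A) = a^* *: adjmx A.
Proof. by rewrite /adjmx map_mxZ linearZ. Qed.

Lemma adjmx_scalar a : adjmx (a%:M : 'M[C]_n) = (a^*)%:M.
Proof. by rewrite /adjmx map_scalar_mx tr_scalar_mx. Qed.

Lemma adjmxK m p (A : 'M[C]_(m, p)) : adjmx (adjmx A) = A.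
Proof. by apply/matrixP => i j; rewrite !mxE conjCK. Qed.

Lemma adjmx_unit A : A \in unitmx -> adjmx A \in unitmx.
Proof. by move=> Au; rewrite /adjmx unitmx_tr map_unitmx. Qed.

Lemma adjmx_inv A : adjmx (invmx A) = invmx (adjmx A).
Proof. by rewrite /adjmx map_invmx trmx_inv. Qed.

Lemma vnorm0 (v : 'rV[C]_n) : v *m adjmx v = 0 -> v = 0.
Proof.
move=> /matrixP /(_ 0 0); rewrite /adjmx !mxE => h.
have h' : \sum_(k | predT k) v 0 k * (v 0 k)^* = 0.
  by rewrite -[X in _ = X]h; apply: eq_bigr => k _; rewrite !mxE.
apply/rowP => j; rewrite mxE.
have := @psumr_eq0P _ _ predT _ (fun k _ => mul_conjC_ge0 (v 0 k)) h' j isT.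
by move/eqP; rewrite mul_conjC_eq0 => /eqP.
Qed.

Lemma herm_unit H (c : C) : adjmx H = H -> c^* != c -> H + c%:M \in unitmx.
Proof.
move=> hH hc; rewrite -row_free_unit; apply: inj_row_free => v hv.
have e1 : v *m H = - (c *: v).
  by apply/eqP; rewrite -subr_eq0 opprK -mul_mx_scalar -mulmxDr hv.
pose x := v *m H *m adjmx v.
have e2 : adjmx x = x by rewrite /x !adjmxM adjmxK hH mulmxA.
have e3 : x = - c *: (v *m adjmx v) by rewrite /x e1 mulNmx -scalemxAl scaleNr.
move: e2; rewrite e3 adjmxZ adjmxM adjmxK => /eqP; rewrite -subr_eq0 -scalerBl.
rewrite scaler_eq0 => /orP [|/eqP]; last exact: vnorm0.
by rewrite rmorphN opprK addrC subr_eq0 eq_sym (negbTE hc).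
Qed.

Lemma comm_scal H a b : (H + a%:M) *m (H + b%:M) = (H + b%:M) *m (H + a%:M).
Proof.
rewrite !mulmxDl !mulmxDr !mul_mx_scalar !mul_scalar_mx !scale_scalar_mx mulrC.
by rewrite -!addrA; congr (_ + _); rewrite !addrA; congr (_ + _); rewrite addrC.
Qed.

Lemma Ci_neq : ('i : C)^* != 'i.
Proof.
rewrite conjCi; apply/eqP => h; have : ('i : C) *+ 2 == 0 by rewrite mulr2n -{1}h addNr.
by rewrite mulrn_eq0 /= (negbTE (neq0Ci C)).
Qed.

Lemma CNi_neq : (- 'i : C)^* != - 'i.
Proof. by rewrite rmorphN eqr_opp Ci_neq. Qed.

Definition psi S H := S *m invmx (H + 'i%:M) *m (H + (- 'i)%:M).

Lemma adj_Ai H : adjmx H = H -> adjmx (H + 'i%:M) = H + (- 'i)%:M.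
Proof. by move=> hH; rewrite adjmxD hH adjmx_scalar conjCi. Qed.

Lemma adj_Bi H : adjmx H = H -> adjmx (H + (- 'i)%:M) = H + 'i%:M.
Proof. by move=> hH; rewrite adjmxD hH adjmx_scalar -conjCi conjCK. Qed.

Lemma psi_unitary S H : S *m adjmx S = 1%:M -> adjmx H = H ->
  psi S H *m adjmx (psi S H) = 1%:M.
Proof.
move=> hS hH.
have Au := herm_unit hH Ci_neq; have Bu := herm_unit hH CNi_neq.
rewrite /psi !adjmxM adjmx_inv adj_Ai // adj_Bi //.
rewrite !mulmxA -(mulmxA _ (H + (- 'i)%:M)) comm_scal mulmxA (mulmxKV Au).
by rewrite (mulmxK Bu).
Qed.

Lemma psi_det S H : S *m adjmx S = 1%:M -> adjmx H = H ->
  \det (S - psi S H) != 0.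
Proof.
move=> hS hH.
have Au := herm_unit hH Ci_neq.
have [Su _] := mulmx1_unit hS.
have -> : S - psi S H = S *m invmx (H + 'i%:M) *m (('i + 'i)%:M).
  rewrite /psi -{1}[S](mulmxKV Au) -mulmxBr; congr (_ *m _).
  by apply/matrixP => i j; rewrite !mxE; case: (i == j); rewrite /= ?mulr1n ?mulr0n; ring.
rewrite -unitfE -unitmxE !unitmx_mul Su unitmx_inv Au /=.
by rewrite unitmxE det_scalar unitrX // unitfE -mulr2n mulrn_eq0 /= neq0Ci.
Qed.

Definition cc : C := 'i + 'i.

Lemma cc_neq0 : cc != 0.
Proof. by rewrite /cc -mulr2n mulrn_eq0 /= neq0Ci. Qed.

Lemma conj_cc : cc^* = - cc.
Proof. by rewrite /cc rmorphD /= conjCi opprD. Qed.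

Definition phiZ S M := invmx (S - M) *m S.
Definition phiH S M := cc *: phiZ S M - 'i%:M.

Lemma phiZ_herm S M : S *m adjmx S = 1%:M -> M *m adjmx M = 1%:M ->
  S - M \in unitmx -> phiZ S M + adjmx (phiZ S M) = 1%:M.
Proof.
move=> hS hM Yu; set Y := S - M; set Z := phiZ S M.
have YZ : Y *m Z = S by rewrite /Z /phiZ mulKVmx.
have ZY : adjmx Z *m adjmx Y = adjmx S by rewrite -adjmxM YZ.
have Ysu : adjmx Y \in unitmx by exact: adjmx_unit.
have e : Y *m (Z + adjmx Z) *m adjmx Y = Y *m 1%:M *m adjmx Y.
  rewrite mulmx1 mulmxDr mulmxDl YZ -mulmxA ZY.
  rewrite /Y adjmxB !mulmxBr !mulmxBl hS hM.
  move: (S *m adjmx M) (M *m adjmx S) => a b.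
  by apply/matrixP => i j; rewrite !mxE; ring.
have e' := congr1 (mulmx^~ (invmx (adjmx Y))) e; rewrite /= !(mulmxK Ysu) in e'.
by have := congr1 (mulmx (invmx Y)) e'; rewrite !(mulKmx Yu).
Qed.

Lemma phiH_herm S M : S *m adjmx S = 1%:M -> M *m adjmx M = 1%:M ->
  S - M \in unitmx -> adjmx (phiH S M) = phiH S M.
Proof.
move=> hS hM Yu; have := phiZ_herm hS hM Yu.
rewrite /phiH adjmxB adjmxZ adjmx_scalar conj_cc conjCi.
move: (phiZ S M) => Z hZ; have -> : adjmx Z = 1%:M - Z by rewrite -hZ addrC addKr.
by apply/matrixP => i j; rewrite !mxE /cc; case: (i == j); rewrite /= ?mulr1n ?mulr0n; ring.
Qed.

Lemma phiH_psi S M : S *m adjmx S = 1%:M -> S - M \in unitmx ->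
  psi S (phiH S M) = M.
Proof.
move=> hS Yu; have [Su _] := mulmx1_unit hS.
set Y := S - M; set Z := phiZ S M.
have Zu : Z \in unitmx by rewrite /Z /phiZ unitmx_mul unitmx_inv Yu.
have e1 : phiH S M + 'i%:M = cc *: Z by rewrite /phiH subrK.
have e2 : phiH S M + (- 'i)%:M = cc *: (Z - 1%:M).
  rewrite /phiH -/Z; clear Zu e1; move: Z => Z'.
  by apply/matrixP => i j; rewrite !mxE /cc; case: (i == j); rewrite /= ?mulr1n ?mulr0n; ring.
have iZ : invmx Z = invmx S *m Y.
  by apply: invmx_eq; rewrite /Z /phiZ mulmxA (mulmxK Su) mulVmx.
rewrite /psi e1 e2 invmxZ ?unitmxZ ?unitfE ?cc_neq0 // iZ.
rewrite -!scalemxAr -scalemxAl scalerA mulfV ?cc_neq0 // scale1r.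
rewrite (mulKVmx Su) mulmxBr mulmx1 /Z /phiZ (mulKVmx Yu) /Y.
by rewrite opprB addrC subrK.
Qed.

Lemma comm_inv A B : A *m B = B *m A -> A \in unitmx ->
  invmx A *m B = B *m invmx A.
Proof.
move=> AB Au.
by rewrite -[LHS](mulmxK Au) -(mulmxA (invmx A) B A) -AB mulmxA mulVmx // mul1mx.
Qed.

Lemma phiH_T S M : S^T = S -> M^T = M -> S - M \in unitmx ->
  (S *m phiH S M)^T = S *m phiH S M.
Proof.
move=> hS hM Yu.
rewrite /phiH /phiZ mulmxBr -scalemxAr mulmxA mul_mx_scalar.
rewrite linearB /= !linearZ /= !trmx_mul trmx_inv hS linearB /= hS hM.
by rewrite mulmxA.
Qed.

Lemma trS_scal S H a : S^T = S -> (S *m H)^T = S *m H ->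
  (H + a%:M)^T *m S = S *m (H + a%:M).
Proof.
move=> hS hH; rewrite linearD /= tr_scalar_mx mulmxDl mulmxDr -hH trmx_mul hS.
by rewrite scalar_mxC.
Qed.

Lemma psi_T S H : S^T = S -> adjmx H = H -> (S *m H)^T = S *m H ->
  (psi S H)^T = psi S H.
Proof.
move=> hS hH hT.
have Au := herm_unit hH Ci_neq.
have Atu : (H + 'i%:M)^T \in unitmx by rewrite unitmx_tr.
have e1 : invmx ((H + 'i%:M)^T) *m S = S *m invmx (H + 'i%:M).
  by rewrite -[LHS](mulmxK Au) -(mulmxA _ S) -(trS_scal _ hS hT) (mulKmx Atu).

rewrite /psi !trmx_mul trmx_inv hS e1 mulmxA (trS_scal _ hS hT).
by rewrite -!mulmxA (comm_inv (comm_scal _ _ _) Au).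
Qed.

Section Conj.
Variable Q : 'M[C]_n.
Hypothesis hQ : Q *m Q = 1%:M.
Definition cQ X := Q *m X *m Q.
Lemma cQM X Y : cQ (X *m Y) = cQ X *m cQ Y.
Proof. by rewrite /cQ !mulmxA -(mulmxA _ Q Q) hQ mulmx1. Qed.
Lemma cQB X Y : cQ (X - Y) = cQ X - cQ Y.
Proof. by rewrite /cQ mulmxBr mulmxBl. Qed.
Lemma cQD X Y : cQ (X + Y) = cQ X + cQ Y.
Proof. by rewrite /cQ mulmxDr mulmxDl. Qed.
Lemma cQZ a X : cQ (a *: X) = a *: cQ X.
Proof. by rewrite /cQ -scalemxAr -scalemxAl. Qed.
Lemma cQs a : cQ (a%:M) = a%:M.
Proof. by rewrite /cQ mul_mx_scalar -scalemxAl hQ scale_scalar_mx mulr1. Qed.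
Lemma cQV X : X \in unitmx -> cQ (invmx X) = invmx (cQ X).
Proof. by move=> Xu; apply/esym/invmx_eq; rewrite -cQM mulmxV // cQs. Qed.

Lemma phiH_Q S M : cQ S = S -> cQ M = M -> S - M \in unitmx ->
  cQ (phiH S M) = phiH S M.
Proof.
move=> hS hM Yu.
by rewrite /phiH /phiZ cQB cQZ cQM cQV // cQB hS hM cQs.
Qed.

Lemma psi_Q S H : cQ S = S -> cQ H = H -> adjmx H = H -> cQ (psi S H) = psi S H.
Proof.
move=> hS hH hh; have Au := herm_unit hh Ci_neq.
by rewrite /psi !cQM cQV // !cQD hS hH !cQs.
Qed.
End Conj.
End Alg.
Section Cont.
Variable R : realType.
Local Notation C := (R[i]).

Definition rc (t : R) : C := (t%:C)%C.

Lemma rc_cont : continuous rc.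
Proof.
move=> t; apply/(@cvgrPdist_lt _ (R[i]^o)) => e e0.
have er : e \is Num.real by exact: gtr0_real.
have e0' : (0 : R) < complex.Re e by rewrite -ltcR RRe_real.
have := (@cvgrPdist_lt _ R^o _ _ _ (@id R) t).1 (cvg_id) _ e0'.
move=> hh; apply: filterS (hh _) => s hs.
rewrite -(RRe_real er) /rc -rmorphB /= normc_def /= expr0n /= addr0 sqrtr_sqr ltcR.
exact: hs.
Qed.

Lemma cD (f g : R -> C) t : {for t, continuous f} -> {for t, continuous g} ->
  {for t, continuous (fun s => f s + g s)}.
Proof. by move=> hf hg; exact: (@cvgD _ (R[i]^o) _ _ _ f g _ _ hf hg). Qed.

Lemma cMl (f g : R -> C) t : {for t, continuous f} -> {for t, continuous g} ->
  {for t, continuous (fun s => f s * g s)}.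
Proof. by move=> hf hg; exact: (@cvgM _ _ _ _ f g _ _ hf hg). Qed.

Lemma cK (a : C) t : {for t, continuous (fun _ : R => a)}.
Proof. exact: cvg_cst. Qed.

Lemma cInv (f : R -> C) t : f t != 0 -> {for t, continuous f} ->
  {for t, continuous (fun s => (f s)^-1)}.
Proof. by move=> h hf; exact: (@cvgV _ _ _ _ f _ h hf). Qed.

Lemma cont_sum (I : Type) (r : seq I) (P : pred I) (F : I -> R -> C) :
  (forall i, continuous (F i)) -> continuous (fun t => \sum_(i <- r | P i) F i t).
Proof.
move=> hF; elim: r => [|a r IH].
  have -> : (fun t => \sum_(i <- [::] | P i) F i t) = fun=> 0.
    by apply/funext => t; rewrite big_nil.
  by move=> t; exact: cK.
have -> : (fun t => \sum_(i <- a :: r | P i) F i t) =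
  fun t => (if P a then F a t else 0) + \sum_(i <- r | P i) F i t.
  by apply/funext => t; rewrite big_cons; case: (P a); rewrite ?add0r.
move=> t; apply: cD; last exact: IH.
by case: (P a); [exact: hF | exact: cK].
Qed.

Lemma cont_prod (I : Type) (r : seq I) (P : pred I) (F : I -> R -> C) :
  (forall i, continuous (F i)) -> continuous (fun t => \prod_(i <- r | P i) F i t).
Proof.
move=> hF; elim: r => [|a r IH].
  have -> : (fun t => \prod_(i <- [::] | P i) F i t) = fun=> 1.
    by apply/funext => t; rewrite big_nil.
  by move=> t; exact: cK.
have -> : (fun t => \prod_(i <- a :: r | P i) F i t) =
  fun t => (if P a then F a t else 1) * \prod_(i <- r | P i) F i t.
  by apply/funext => t; rewrite big_cons; case: (P a); rewrite ?mul1r.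
move=> t; apply: cMl; last exact: IH.
by case: (P a); [exact: hF | exact: cK].
Qed.

Definition ec m p (f : R -> 'M[C]_(m, p)) := forall i j, continuous (fun t => f t i j).

Lemma ec_cont m p (f : R -> 'M[C]_(m, p)) : ec f -> continuous f.
Proof.
move=> hf t A [P hP sub].
apply: (filterS sub).
have h : \forall s \near t, forall i, forall j, P i j (f s i j).
  apply: (@filter_forall _ _ _ (nbhs t) _) => i; apply: (@filter_forall _ _ _ (nbhs t) _) => j.
  exact: (hf i j t _ (hP i j)).
exact: h.
Qed.

Lemma ec_cst m p (A : 'M[C]_(m, p)) : ec (fun _ => A).
Proof. by move=> i j t; exact: cK. Qed.

Lemma ec_add m p (f g : R -> 'M[C]_(m, p)) : ec f -> ec g -> ec (fun t => f t + g t).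
Proof.
move=> hf hg i j; have -> : (fun t => (f t + g t) i j) = fun t => f t i j + g t i j.
  by apply/funext => t; rewrite mxE.
by move=> t; apply: cD; [exact: hf | exact: hg].
Qed.

Lemma ec_scale m p (a : R -> C) (f : R -> 'M[C]_(m, p)) : continuous a -> ec f ->
  ec (fun t => a t *: f t).
Proof.
move=> ha hf i j; have -> : (fun t => (a t *: f t) i j) = fun t => a t * f t i j.
  by apply/funext => t; rewrite mxE.
by move=> t; apply: cMl; [exact: ha | exact: hf].
Qed.

Lemma ec_mul m p q (f : R -> 'M[C]_(m, p)) (g : R -> 'M[C]_(p, q)) : ec f -> ec g ->
  ec (fun t => f t *m g t).
Proof.
move=> hf hg i j; have -> : (fun t => (f t *m g t) i j) = fun t => \sum_k f t i k * g t k j.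
  by apply/funext => t; rewrite mxE.
by apply: cont_sum => k t; apply: cMl; [exact: hf | exact: hg].
Qed.

Lemma cont_det n (f : R -> 'M[C]_n) : ec f -> continuous (fun t => \det (f t)).
Proof.
move=> hf; rewrite /determinant; apply: cont_sum => s t; apply: cMl; first exact: cK.
exact: (@cont_prod _ _ _ (fun i t => f t i (perm.fun_of_perm.body s i)) (fun i => hf _ _) t).
Qed.

Lemma ec_adj n (f : R -> 'M[C]_n) : ec f -> ec (fun t => \adj (f t)).
Proof.
move=> hf i j; have -> : (fun t => (\adj (f t)) i j) =
   fun t => (-1) ^+ (j + i) * \det (row' j (col' i (f t))).
  by apply/funext => t; rewrite mxE.
move=> t; apply: cMl; first exact: cK.
apply: cont_det => k l; have -> : (fun t => row' j (col' i (f t)) k l) = fun t => f t (lift j k) (lift i l).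
  by apply/funext => s; rewrite !mxE.
exact: hf.
Qed.

Lemma ec_inv n (f : R -> 'M[C]_n) : ec f -> (forall t, f t \in unitmx) ->
  ec (fun t => invmx (f t)).
Proof.
move=> hf hu; have -> : (fun t => invmx (f t)) = fun t => (\det (f t))^-1 *: \adj (f t).
  by apply/funext => t; rewrite /invmx hu.
move=> i j; have -> : (fun t => ((\det (f t))^-1 *: \adj (f t)) i j) =
   fun t => (\det (f t))^-1 * \adj (f t) i j.
  by apply/funext => t; rewrite mxE.
move=> t; apply: cMl; last exact: ec_adj.
apply: cInv; last exact: cont_det.
by rewrite -unitfE -unitmxE.
Qed.
End Cont.

Section Main.
Variable R : realType.
Local Notation C := (R[i]).

Lemma rc_real (t : R) : (rc t)^* = rc t.
Proof. by apply: conj_Creal; rewrite /rc complex_real. Qed.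

Lemma path_lemma n (S : 'M[C]_n) (K : 'M[C]_n -> Prop) (P : set 'M[C]_n) :
  (forall M, P M -> exists H, K H /\ psi S H = M) ->
  (forall H, K H -> P (psi S H)) ->
  (forall H1 H2 t, K H1 -> K H2 -> K (H1 + rc t *: (H2 - H1))) ->
  (forall H, K H -> adjmx H = H) ->
  path_connected R P.
Proof.
move=> ha hb hc hd x y Px Py.
have [H1 [K1 e1]] := ha _ Px; have [H2 [K2 e2]] := ha _ Py.
pose cb t := H1 + rc t *: (H2 - H1).
exists (fun t => psi S (cb t)); split; [|split; [|split]].
- apply: continuous_subspaceT; apply: ec_cont.
  have ecb : ec cb by apply: ec_add; [exact: ec_cst | apply: ec_scale; [exact: rc_cont | exact: ec_cst]].
  apply: ec_mul; last by apply: ec_add; [exact: ecb | exact: ec_cst].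
  apply: ec_mul; first exact: ec_cst.
  apply: ec_inv; first by apply: ec_add; [exact: ecb | exact: ec_cst].
  by move=> t; exact: (herm_unit (hd _ (hc _ _ t K1 K2)) (@Ci_neq R)).
- by rewrite /cb /rc rmorph0 scale0r addr0.
- by rewrite /cb /rc rmorph1 scale1r addrC subrK.
- by move=> _ [t _ <-]; apply: hb; apply: hc.
Qed.

End Main.

Lemma Rswap2 (R : realType) N0 : Rswap R N0 *m Rswap R N0 = 1%:M.
Proof.
rewrite /Rswap mulmx_block !mul0mx !mulmx0 !mul1mx !add0r !addr0.
by rewrite -scalar_mx_block.
Qed.

Unset Implicit Arguments. Set Strict Implicit.

Theorem mainTheorem10 (R : realType) (N0 : nat) (hN0 : (1 <= N0)%N)
  (S0 : 'M[R[i]]_(N0 + N0)) (hS0 : unitary_group S0) :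
  let U1 := [set M : 'M[R[i]]_(N0 + N0) | unitary_group M /\ \det (S0 - M) != 0] in
  path_connected R U1 /\
  (S0 = S0^T -> path_connected R [set M | U1 M /\ M = M^T]) /\
  (S0 = Ptransp S0 -> path_connected R [set M | U1 M /\ M = Ptransp M]) /\
  (S0 = S0^T /\ S0 = Ptransp S0 ->
     path_connected R [set M | U1 M /\ M = M^T /\ M = Ptransp M]).
Proof.
move=> U1.
have hS : S0 *m adjmx S0 = 1%:M := hS0.
have hQ := Rswap2 R N0.
have PE : forall M, Ptransp M = cQ (Rswap R N0) M by [].
have Yu : forall M, U1 M -> S0 - M \in unitmx.
  by move=> M [_ hM]; rewrite unitmxE unitfE.
have hU : forall M, U1 M -> M *m adjmx M = 1%:M by move=> M [].
have psiU : forall H : 'M[R[i]]_(N0 + N0), adjmx H = H -> U1 (psi S0 H).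
  by move=> H hH; split; [exact: psi_unitary | exact: psi_det].
have adjc : forall (H1 H2 : 'M[R[i]]_(N0 + N0)) (t : R), adjmx H1 = H1 -> adjmx H2 = H2 ->
    adjmx (H1 + rc t *: (H2 - H1)) = H1 + rc t *: (H2 - H1).
  by move=> H1 H2 t h1 h2; rewrite adjmxD adjmxZ adjmxB h1 h2 rc_real.
have Tc : forall (H1 H2 : 'M[R[i]]_(N0 + N0)) (t : R), (S0 *m H1)^T = S0 *m H1 -> (S0 *m H2)^T = S0 *m H2 ->
    (S0 *m (H1 + rc t *: (H2 - H1)))^T = S0 *m (H1 + rc t *: (H2 - H1)).
  move=> H1 H2 t h1 h2.
  by rewrite mulmxDr -scalemxAr mulmxBr linearD /= linearZ /= linearB /= h1 h2.
have Pc : forall (H1 H2 : 'M[R[i]]_(N0 + N0)) (t : R), Ptransp H1 = H1 -> Ptransp H2 = H2 ->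
    Ptransp (H1 + rc t *: (H2 - H1)) = H1 + rc t *: (H2 - H1).
  move=> H1 H2 t; rewrite !PE => h1 h2.
  by rewrite cQD cQZ cQB h1 h2.
split; [|split; [|split]].
- apply: (path_lemma (S := S0) (K := fun H => adjmx H = H)).
  + move=> M UM; exists (phiH S0 M); split; first exact: phiH_herm (hU _ UM) (Yu _ UM).
    exact: phiH_psi (Yu _ UM).
  + exact: psiU.
  + by move=> *; apply: adjc.
  + by [].
- move=> hT; have hT' : S0^T = S0 by rewrite -hT.
  apply: (path_lemma (S := S0) (K := fun H => adjmx H = H /\ (S0 *m H)^T = S0 *m H)).
  + move=> M [UM hM]; exists (phiH S0 M); split; last exact: phiH_psi (Yu _ UM).
    split; first exact: phiH_herm (hU _ UM) (Yu _ UM).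
    exact: phiH_T hT' (esym hM) (Yu _ UM).
  + move=> H [hH hH']; split; first exact: psiU.
    by rewrite (psi_T hT' hH hH').
  + by move=> H1 H2 t [a1 b1] [a2 b2]; split; [apply: adjc | apply: Tc].
  + by move=> H [].
- move=> hP; have hP' : cQ (Rswap R N0) S0 = S0 by rewrite -PE -hP.
  apply: (path_lemma (S := S0) (K := fun H => adjmx H = H /\ Ptransp H = H)).
  + move=> M [UM hM]; exists (phiH S0 M); split; last exact: phiH_psi (Yu _ UM).
    split; first exact: phiH_herm (hU _ UM) (Yu _ UM).
    have hM' : cQ (Rswap R N0) M = M by rewrite -PE -hM.
    by rewrite PE (phiH_Q hQ hP' hM' (Yu _ UM)).
  + move=> H [hH hH']; split; first exact: psiU.
    have hH'' : cQ (Rswap R N0) H = H by rewrite -PE.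
    by rewrite PE (psi_Q hQ hP' hH'' hH).
  + by move=> H1 H2 t [a1 b1] [a2 b2]; split; [apply: adjc | apply: Pc].
  + by move=> H [].
- move=> [hT hP]; have hT' : S0^T = S0 by rewrite -hT.
  have hP' : cQ (Rswap R N0) S0 = S0 by rewrite -PE -hP.
  apply: (path_lemma (S := S0) (K := fun H => adjmx H = H /\ (S0 *m H)^T = S0 *m H /\ Ptransp H = H)).
  + move=> M [UM [hM hMP]]; exists (phiH S0 M); split; last exact: phiH_psi (Yu _ UM).
    split; first exact: phiH_herm (hU _ UM) (Yu _ UM).
    split; first exact: phiH_T hT' (esym hM) (Yu _ UM).
    have hM' : cQ (Rswap R N0) M = M by rewrite -PE -hMP.
    by rewrite PE (phiH_Q hQ hP' hM' (Yu _ UM)).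
  + move=> H [hH [hH' hHP]]; split; first exact: psiU.
    split; first by rewrite (psi_T hT' hH hH').
    have hH'' : cQ (Rswap R N0) H = H by rewrite -PE.
    by rewrite PE (psi_Q hQ hP' hH'' hH).
  + by move=> H1 H2 t [a1 [b1 c1]] [a2 [b2 c2]]; split; [apply: adjc | split; [apply: Tc | apply: Pc]].
  + by move=> H [].
Qed.
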